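(* For every quasiterm $X$ with $\mathrm{qGood}\;X$ and every varsort $xs$, the set $\{x : \mathrm{var} \mid \mathrm{qFresh}\;xs\;x\;X\}$ has cardinality $|\mathrm{var}|$.
   Context: Fix types $\mathrm{var}$ (variables), $\mathrm{varsort}$ (sorts of variables), $\mathrm{index}$, $\mathrm{bindex}$ (indexes of free and bound arguments) and $\mathrm{opsym}$ (operation symbols). For types $\alpha,\beta$, $(\alpha,\beta)\,\mathrm{input}$ is the type of partial functions $\alpha\to\beta\;\mathrm{option}$ (values $\mathrm{None}$ or $\mathrm{Some}\;b$); $\mathrm{dom}\,f=\{i\mid f\,i\neq\mathrm{None}\}$. For a predicate $P$ on $\beta$, $\uparrow P\;inp$ holds iff $P\,b$ for all $i$ with $inp\;i=\mathrm{Some}\;b$. Quasiterms and quasiabstractions are the mutually recursive free datatypes $\mathrm{qterm} = \mathrm{qVar}\;\mathrm{varsort}\;\mathrm{var} \mid \mathrm{qOp}\;\mathrm{opsym}\;((\mathrm{index},\mathrm{qterm})\,\mathrm{input})\;((\mathrm{bindex},\mathrm{qabs})\,\mathrm{input})$ and $\mathrm{qabs} = \mathrm{qAbs}\;\mathrm{varsort}\;\mathrm{var}\;\mathrm{qterm}$, where in $\mathrm{qAbs}\;xs\;x\;X$ the variable $x$ of varsort $xs$ is bound in $X$. $\mathrm{qFresh}\;xs\;x\;X$ means that the variable $x$ of varsort $xs$ has no free occurrence in $X$ (i.e. $\mathrm{qFresh}\;xs\;x\;(\mathrm{qVar}\;ys\;y)\iff (xs,x)\neq(ys,y)$; $\mathrm{qFresh}$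 holds for $\mathrm{qOp}\;\delta\;inp\;binp$ iff it holds for all components of $inp$ and $binp$; and it holds for $\mathrm{qAbs}\;ys\;y\;X$ iff $(xs,x)=(ys,y)$ or it holds for $X$). Goodness is defined mutually recursively: $\mathrm{qGood}(\mathrm{qVar}\;xs\;x)$ always; $\mathrm{qGood}(\mathrm{qOp}\;\delta\;inp\;binp)\iff \uparrow\mathrm{qGood}\;inp\wedge\uparrow\mathrm{qGoodAbs}\;binp\wedge|\mathrm{dom}\;inp|<|\mathrm{var}|\wedge|\mathrm{dom}\;binp|<|\mathrm{var}|$; $\mathrm{qGoodAbs}(\mathrm{qAbs}\;xs\;x\;X)\iff\mathrm{qGood}\;X$. Standing assumption: $|\mathrm{var}|$ is an infinite regular cardinal. *)

(* Defs.v *)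
From Stdlib Require Import Classical.

Definition card_le (A B : Type) : Prop :=
  exists f : A -> B, forall a1 a2, f a1 = f a2 -> a1 = a2.
Definition card_lt (A B : Type) : Prop := card_le A B /\ ~ card_le B A.
Definition card_eq (A B : Type) : Prop :=
  exists f : A -> B, (forall a1 a2, f a1 = f a2 -> a1 = a2) /\ (forall b, exists a, f a = b).

Definition infinite_type (V : Type) : Prop := card_le nat V.
Definition regular_type (V : Type) : Prop :=
  forall (I : Type) (F : I -> V -> Prop),
    card_lt I V ->
    (forall i, card_lt {x : V | F i x} V) ->
    card_lt {x : V | exists i, F i x} V.

Definition input (A B : Type) : Type := A -> option B.
Definition dom {A B : Type} (f : input A B) : Type := {i : A | f i <> None}.
Definition liftAll {A B : Type} (P : B -> Prop) (inp : input A B) : Prop :=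
  forall i b, inp i = Some b -> P b.

Section Quasi.
Variables (var varsort index bindex opsym : Type).

Inductive qterm : Type :=
| qVar : varsort -> var -> qterm
| qOp : opsym -> (index -> option qterm) -> (bindex -> option qabs) -> qterm
with qabs : Type :=
| qAbs : varsort -> var -> qterm -> qabs.

Fixpoint qFresh (xs : varsort) (x : var) (X : qterm) {struct X} : Prop :=
  match X with
  | qVar ys y => (xs, x) <> (ys, y)
  | qOp _ inp binp =>
      (forall i, match inp i with Some Y => qFresh xs x Y | None => True end) /\
      (forall i, match binp i with Some A => qFreshAbs xs x A | None => True end)
  end
with qFreshAbs (xs : varsort) (x : var) (A : qabs) {struct A} : Prop :=
  match A with
  | qAbs ys y Y => (xs, x) = (ys, y) \/ qFresh xs x Y
  end.

Fixpoint qGood (X : qterm) : Prop :=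
  match X with
  | qVar _ _ => True
  | qOp _ inp binp =>
      (forall i, match inp i with Some Y => qGood Y | None => True end) /\
      (forall i, match binp i with Some A => qGoodAbs A | None => True end) /\
      card_lt (dom inp) var /\ card_lt (dom binp) var
  end
with qGoodAbs (A : qabs) : Prop :=
  match A with
  | qAbs _ _ Y => qGood Y
  end.

(* sanity: the inline "match" clauses are exactly the uparrow lifting *)
Lemma qGood_qOp (d : opsym) inp binp :
  qGood (qOp d inp binp) <->
  liftAll qGood inp /\ liftAll qGoodAbs binp /\
  card_lt (dom inp) var /\ card_lt (dom binp) var.
Proof.
  simpl; unfold liftAll; split.
  - intros [H1 [H2 H3]]; split; [|split]; auto.
    + intros i b E; specialize (H1 i); rewrite E in H1; exact H1.
    + intros i b E; specialize (H2 i); rewrite E in H2; exact H2.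
  - intros [H1 [H2 H3]]; split; [|split]; auto.
    + intros i; specialize (H1 i); destruct (inp i); auto.
    + intros i; specialize (H2 i); destruct (binp i); auto.
Qed.
End Quasi.

Arguments qVar {var varsort index bindex opsym}.
Arguments qOp {var varsort index bindex opsym}.
Arguments qAbs {var varsort index bindex opsym}.
Arguments qFresh {var varsort index bindex opsym}.
Arguments qFreshAbs {var varsort index bindex opsym}.
Arguments qGood {var varsort index bindex opsym}.
Arguments qGoodAbs {var varsort index bindex opsym}.

(* Main.v *)
Require Import Defs.
From Stdlib Require Import Classical ClassicalEpsilon.

Fixpoint SBC (A B : Type) (f : A -> B) (g : B -> A) (n : nat) (a : A) : Prop :=
    match n with
    | O => ~ exists b, g b = a
    | S m => exists a', SBC A B f g m a' /\ g (f a') = a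
    end.

Lemma SB (A B : Type) : card_le A B -> card_le B A -> card_eq A B.
Proof.
  intros [f Hf] [g Hg].
  set (C := SBC A B f g).
  assert (Hinv : forall a, ~ (exists n, C n a) -> {b | g b = a}).
  { intros a Ha. apply constructive_indefinite_description.
    apply NNPP; intro Hn; apply Ha; exists 0; exact Hn. }
  set (h := fun a => match excluded_middle_informative (exists n, C n a) with
                    | left _ => f a
                    | right H => proj1_sig (Hinv a H) end).
  exists h. split.
  - intros a1 a2. unfold h.
    destruct (excluded_middle_informative (exists n, C n a1)) as [H1|H1];
    destruct (excluded_middle_informative (exists n, C n a2)) as [H2|H2].
    + apply Hf.
    + destruct (Hinv a2 H2) as [b2 e2]; simpl; intro E.
      exfalso; apply H2. destruct H1 as [n Hn]. exists (S n). simpl.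
      exists a1; split; [exact Hn| rewrite E; exact e2].
    + destruct (Hinv a1 H1) as [b1 e1]; simpl; intro E.
      exfalso; apply H1. destruct H2 as [n Hn]. exists (S n). simpl.
      exists a2; split; [exact Hn| rewrite <- E; exact e1].
    + destruct (Hinv a1 H1) as [b1 e1]; destruct (Hinv a2 H2) as [b2 e2]; simpl.
      intro E; subst; reflexivity.
  - intro b. destruct (classic (exists n, C n (g b))) as [[n Hn]|Hn].
    + destruct n as [|n].
      * exfalso; apply Hn; exists b; reflexivity.
      * destruct Hn as [a' [Ha' E]]. exists a'. unfold h.
        destruct (excluded_middle_informative (exists n, C n a')) as [_|H].
        -- apply Hg; exact E.
        -- exfalso; apply H; exists n; exact Ha'.
    + exists (g b). unfold h.
      destruct (excluded_middle_informative (exists n, C n (g b))) as [H|H].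
      * contradiction.
      * destruct (Hinv (g b) H) as [b' e]; simpl. apply Hg; exact e.
Qed.

Lemma card_lt_sub (V : Type) (P Q : V -> Prop) :
  (forall x, P x -> Q x) -> card_lt {x | Q x} V -> card_lt {x | P x} V.
Proof.
  intros HPQ [_ Hn]. split.
  - exists (@proj1_sig _ _). intros [a1 p1] [a2 p2]; simpl; intro E; subst.
    f_equal; apply proof_irrelevance.
  - intros [f Hf]. apply Hn.
    exists (fun v => exist _ (proj1_sig (f v)) (HPQ _ (proj2_sig (f v)))).
    intros a1 a2 E. apply Hf. destruct (f a1) as [x1 p1], (f a2) as [x2 p2].
    simpl in E. injection E; intro; subst. f_equal; apply proof_irrelevance.
Qed.

Lemma empty_lt (V : Type) (P : V -> Prop) :
  infinite_type V -> (forall x, ~ P x) -> card_lt {x | P x} V.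
Proof.
  intros [f _] HP. split.
  - exists (@proj1_sig _ _). intros [a1 p1]; exfalso; exact (HP _ p1).
  - intros [g _]. destruct (g (f 0)) as [x p]. exact (HP _ p).
Qed.

Lemma single_lt (V : Type) (y : V) :
  infinite_type V -> card_lt {x | x = y} V.
Proof.
  intros [f Hf]. split.
  - exists (@proj1_sig _ _). intros [a1 p1] [a2 p2]; simpl; intro E; subst.
    f_equal; apply proof_irrelevance.
  - intros [g Hg].
    assert (E : g (f 0) = g (f 1)).
    { destruct (g (f 0)) as [x0 p0], (g (f 1)) as [x1 p1]. subst.
      f_equal; apply proof_irrelevance. }
    apply Hg, Hf in E. discriminate.
Qed.

Lemma bool_lt (V : Type) : infinite_type V -> card_lt bool V.
Proof.
  intros [f Hf]. split.
  - exists (fun b : bool => if b then f 0 else f 1).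
    intros [|] [|] E; auto; apply Hf in E; discriminate.
  - intros [g Hg].
    assert (H0 := fun n m (E : g (f n) = g (f m)) => Hf _ _ (Hg _ _ E)).
    destruct (g (f 0)) eqn:E0, (g (f 1)) eqn:E1, (g (f 2)) eqn:E2;
      try (assert (X := H0 0 1 ltac:(congruence)); discriminate);
      try (assert (X := H0 0 2 ltac:(congruence)); discriminate);
      try (assert (X := H0 1 2 ltac:(congruence)); discriminate).
Qed.

Lemma union2 (V : Type) (P Q : V -> Prop) :
  infinite_type V -> regular_type V ->
  card_lt {x | P x} V -> card_lt {x | Q x} V -> card_lt {x | P x \/ Q x} V.
Proof.
  intros Hi Hr HP HQ.
  apply (card_lt_sub V _ (fun x => exists b : bool, (if b then P else Q) x)).
  - intros x [H|H]; [exists true|exists false]; exact H.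
  - apply Hr. apply bool_lt; exact Hi. intros [|]; assumption.
Qed.

Section Ind.
Variables (var varsort index bindex opsym : Type).
Variables (P : qterm var varsort index bindex opsym -> Prop)
          (Q : qabs var varsort index bindex opsym -> Prop).
Hypothesis HV : forall ys y, P (qVar ys y).
Hypothesis HO : forall d inp binp,
  (forall i Y, inp i = Some Y -> P Y) ->
  (forall i A, binp i = Some A -> Q A) -> P (qOp d inp binp).
Hypothesis HA : forall ys y Y, P Y -> Q (qAbs ys y Y).

Fixpoint qt_ind (X : qterm var varsort index bindex opsym) : P X :=
  match X with
  | qVar ys y => HV ys y
  | qOp d inp binp =>
      HO d inp binp
        (fun i Y => match inp i as o return o = Some Y -> P Y with
                    | Some Z => fun e =>
                        match e in _ = o return (match o with Some W => P W | None => True end)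
                        with eq_refl => qt_ind Z end
                    | None => fun e => False_ind _ (ltac:(discriminate e))
                    end)
        (fun i A => match binp i as o return o = Some A -> Q A with
                    | Some Z => fun e =>
                        match e in _ = o return (match o with Some W => Q W | None => True end)
                        with eq_refl => qa_ind Z end
                    | None => fun e => False_ind _ (ltac:(discriminate e))
                    end)
  end
with qa_ind (A : qabs var varsort index bindex opsym) : Q A :=
  match A with
  | qAbs ys y Y => HA ys y Y (qt_ind Y)
  end.
End Ind.

Lemma nonfresh_small (var varsort index bindex opsym : Type)
  (var_inf : infinite_type var) (var_reg : regular_type var) (xs : varsort) :
  forall X : qterm var varsort index bindex opsym,
  qGood X -> card_lt {x : var | ~ qFresh xs x X} var.
Proof.
  apply (qt_ind var varsort index bindex opsym
    (fun X => qGood X -> card_lt {x : var | ~ qFresh xs x X} var)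
    (fun A => qGoodAbs A -> card_lt {x : var | ~ qFreshAbs xs x A} var)).
  - intros ys y _. apply (card_lt_sub _ _ (fun x => x = y)).
    + intros x H. simpl in H. apply NNPP; intro N; apply H; congruence.
    + apply single_lt; exact var_inf.
  - intros d inp binp IH1 IH2 [G1 [G2 [L1 L2]]].
    set (F := fun (i : dom inp) x =>
           match inp (proj1_sig i) with Some Y => ~ qFresh xs x Y | None => False end).
    set (G := fun (j : dom binp) x =>
           match binp (proj1_sig j) with Some A => ~ qFreshAbs xs x A | None => False end).
    apply (card_lt_sub _ _ (fun x => (exists i, F i x) \/ (exists j, G j x))).
    + intros x H. simpl in H.
      destruct (classic (forall i, match inp i with Some Y => qFresh xs x Y | None => True end)) as [H1|H1].
      * right. apply NNPP; intro N; apply H; split; [exact H1|].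
        intro j. destruct (binp j) as [A|] eqn:E; [|exact I].
        apply NNPP; intro N2; apply N.
        assert (Hd : binp j <> None) by congruence.
        exists (exist _ j Hd). unfold G; simpl. rewrite E. exact N2.
      * left. apply not_all_ex_not in H1. destruct H1 as [i Hi].
        destruct (inp i) as [Y|] eqn:E; [|exfalso; exact (Hi I)].
        assert (Hd : inp i <> None) by congruence.
        exists (exist _ i Hd). unfold F; simpl. rewrite E. exact Hi.
    + apply union2; try assumption.
      * apply var_reg; [exact L1|]. intros [i Hd]. unfold F; simpl.
        destruct (inp i) as [Y|] eqn:E.
        -- apply (IH1 i Y E). specialize (G1 i); rewrite E in G1; exact G1.
        -- apply empty_lt; auto.
      * apply var_reg; [exact L2|]. intros [i Hd]. unfold G; simpl.
        destruct (binp i) as [Y|] eqn:E.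
        -- apply (IH2 i Y E). specialize (G2 i); rewrite E in G2; exact G2.
        -- apply empty_lt; auto.
  - intros ys y Y IH HG. simpl in HG.
    apply (card_lt_sub _ _ (fun x => ~ qFresh xs x Y)).
    + intros x H N; apply H; simpl; right; exact N.
    + apply IH; exact HG.
Qed.

Theorem proposition1 (var varsort index bindex opsym : Type)
  (var_inf : infinite_type var) (var_reg : regular_type var)
  (X : qterm var varsort index bindex opsym) (xs : varsort) :
  qGood X ->
  card_eq {x : var | qFresh xs x X} var.
Proof.
  intros HG. apply SB.
  - exists (@proj1_sig _ _). intros [a1 p1] [a2 p2]; simpl; intro E; subst.
    f_equal; apply proof_irrelevance.
  - apply NNPP; intro N.
    assert (Hlt : card_lt {x : var | qFresh xs x X} var).
    { split; [|exact N].
      exists (@proj1_sig _ _). intros [a1 p1] [a2 p2]; simpl; intro E; subst.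
      f_equal; apply proof_irrelevance. }
    pose proof (union2 var _ _ var_inf var_reg Hlt
                  (nonfresh_small var varsort index bindex opsym var_inf var_reg xs X HG)) as [_ H].
    apply H. exists (fun v => exist _ v (classic (qFresh xs v X))).
    intros a1 a2 E; injection E; auto.
Qed.
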